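(* Let $n=2k+1$ be odd with $k\ge1$, $\theta=\frac{2\pi}{n+2}$, and for $L>0$ let $\mathcal{N}^{(L)}=\{(\ell_j,r_j): j\in[1:n]\}$ be given by $\ell_n=L$, $r_n=1$, and $$\ell_{2i-1}=\ell_{2i}=\frac{2\sin\theta\,\sin(i\theta)}{\cos(i\theta)-\cos((i+1)\theta)},\qquad r_{2i-1}=r_{2i}=\frac{2\sin\theta\,\sin(i\theta)}{\cos((i-1)\theta)-\cos(i\theta)},\qquad i\in[1:k].$$ Then $\mathsf{C}_1(\mathcal{N}_j)=1$ for all $j\in[1:n-1]$, $\mathsf{C}_1(\mathcal{N}^{(L)})=1$ for every $L>0$, $\mathsf{C}_n(\mathcal{N}^{(L)})\le r_1=2+2\cos\theta$ for every $L>0$, and $\lim_{L\to\infty}\mathsf{C}_n(\mathcal{N}^{(L)})=2+2\cos\theta$. Hence $\lim_{L\to\infty}\frac{\mathsf{C}_1(\mathcal{N}^{(L)})}{\mathsf{C}_n(\mathcal{N}^{(L)})}=\frac{1}{2+2\cos\left(\frac{2\pi}{n+2}\right)}$.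
   Context: For a network $\mathcal{N}=\{(\ell_i,r_i): i\in[1:n]\}$ with nonnegative link capacities, with complements inside $[1:n]$ and maxima over empty sets equal to $0$, the approximate capacity is $\mathsf{C}_n(\mathcal{N})=\max_{\boldsymbol\lambda}\min_{\Omega\subseteq[1:n]}\sum_{\mathcal{S}\subseteq[1:n]}\lambda_{\mathcal{S}}\big(\max_{i\in\mathcal{S}^c\cap\Omega^c}\ell_i+\max_{i\in\mathcal{S}\cap\Omega}r_i\big)$, the maximum being over schedules $\boldsymbol\lambda=(\lambda_{\mathcal{S}})_{\mathcal{S}\subseteq[1:n]}$, $\lambda_{\mathcal{S}}\ge0$, $\sum_{\mathcal{S}}\lambda_{\mathcal{S}}=1$. $\mathsf{C}_1(\mathcal{N}_i)=\frac{\ell_ir_i}{\ell_i+r_i}$ and $\mathsf{C}_1(\mathcal{N})=\max_i\mathsf{C}_1(\mathcal{N}_i)$. *)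

(* Defs.v *)
From Stdlib Require Import Reals ClassicalEpsilon.
From mathcomp Require Import all_boot.
Set Implicit Arguments. Unset Strict Implicit. Unset Printing Implicit Defensive.
Open Scope R_scope.

(* A network on n nodes: link capacities l i (= ell_i) and r i. Node i : 'I_n
   is node i+1 of the paper. *)

Definition is_schedule (n : nat) (lam : {set 'I_n} -> R) : Prop :=
  (forall S, 0 <= lam S) /\ \big[Rplus/0]_(S : {set 'I_n}) lam S = 1.

(* maxima over empty sets are 0 (capacities are nonnegative) *)
Definition cut_value (n : nat) (l r : 'I_n -> R) (lam : {set 'I_n} -> R)
    (Om : {set 'I_n}) : R :=
  \big[Rplus/0]_(S : {set 'I_n})
     (lam S * (\big[Rmax/0]_(i in (~: S) :&: (~: Om)) l i
               + \big[Rmax/0]_(i in S :&: Om) r i)).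

(* min over all Omega subseteq [1:n] (the set of Omega's is nonempty; the
   seed value is the term for Omega = [1:n], which is itself in the range) *)
Definition min_cut (n : nat) (l r : 'I_n -> R) (lam : {set 'I_n} -> R) : R :=
  \big[Rmin/cut_value l r lam setT]_(Om : {set 'I_n}) cut_value l r lam Om.

(* C_n(N) = max over schedules of min_cut; written as the least upper bound
   of the set of achievable values (which is attained, so equals the max). *)
Definition Cn_net (n : nat) (l r : 'I_n -> R) : R :=
  epsilon (inhabits 0)
    (fun c => is_lub (fun x => exists lam, is_schedule lam /\ x = min_cut l r lam) c).

Definition C1_link (l r : R) : R := l * r / (l + r).
Definition C1_net (n : nat) (l r : 'I_n -> R) : R :=
  \big[Rmax/0]_(i : 'I_n) C1_link (l i) (r i).

(* The construction, n = 2k+1 nodes; theta = 2 pi / (n+2). For 0-based index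
   j < 2k, the paper index is j+1 and i = j/2 + 1. The last node (j = 2k) has
   ell = L, r = 1. *)
Definition theta (k : nat) : R := 2 * PI / INR (k.*2.+1 + 2).

Definition ellN (k : nat) (L : R) (j : 'I_(k.*2.+1)) : R :=
  if (val j == k.*2)%N then L
  else let i := INR ((val j)./2.+1) in
       2 * sin (theta k) * sin (i * theta k)
         / (cos (i * theta k) - cos ((i + 1) * theta k)).

Definition rN (k : nat) (j : 'I_(k.*2.+1)) : R :=
  if (val j == k.*2)%N then 1
  else let i := INR ((val j)./2.+1) in
       2 * sin (theta k) * sin (i * theta k)
         / (cos ((i - 1) * theta k) - cos (i * theta k)).

Arguments ellN : clear implicits.
Arguments rN : clear implicits.

(* Main.v *)
Require Import Defs.
From Stdlib Require Import Reals ClassicalEpsilon Lra Lia Psatz.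
From HB Require Import structures.
From mathcomp Require Import all_boot zify.
Open Scope R_scope.

Lemma trig_C1 (A t : R) : 0 < sin t -> 0 < sin A ->
  0 < cos (A - t) - cos A -> 0 < cos A - cos (A + t) ->
  let N := 2 * sin t * sin A in
  N / (cos A - cos (A + t)) * (N / (cos (A - t) - cos A)) /
  (N / (cos A - cos (A + t)) + N / (cos (A - t) - cos A)) = 1.
Proof.
intros hs hA h1 h2 N.
assert (hN : 0 < N) by (unfold N; nra).
assert (e : cos (A - t) - cos A + (cos A - cos (A + t)) = N).
{ unfold N; rewrite cos_minus cos_plus; ring. }
set D1 := cos (A - t) - cos A in h1 e |- *.
set D2 := cos A - cos (A + t) in h2 e |- *.
assert (hs2 : N / D2 + N / D1 = N * N / (D1 * D2)).
{ replace (N * N) with (N * (D1 + D2)) by (rewrite e; ring). field; lra. }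
rewrite hs2. field. repeat split; lra.
Qed.

Lemma trig_sum (x t : R) : cos x - cos (x + t) <> 0 ->
  2 * sin t * sin x / (cos x - cos (x + t)) +
  2 * sin t * sin (x + t) / (cos x - cos (x + t)) = 2 + 2 * cos t.
Proof.
intros h. apply (Rmult_eq_reg_r (cos x - cos (x + t))); [|exact h].
field_simplify; [|exact h].
rewrite sin_plus cos_plus.
pose proof (sin2_cos2 t) as H. unfold Rsqr in H.
apply Rminus_diag_uniq.
transitivity (2 * cos x * (sin t * sin t + cos t * cos t - 1)); [ring | rewrite H; ring].
Qed.

Lemma trig_r1 (t : R) : 1 - cos t <> 0 ->
  2 * sin t * sin t / (1 - cos t) = 2 + 2 * cos t.
Proof.
intros h. apply (Rmult_eq_reg_r (1 - cos t)); [|exact h].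
field_simplify; [|exact h].
pose proof (sin2_cos2 t). unfold Rsqr in *. nra.
Qed.

Lemma trig_last (p : R) : cos (PI - 3 * p) - cos (PI - p) <> 0 ->
  2 * sin (2 * p) * sin (PI - 3 * p) / (cos (PI - 3 * p) - cos (PI - p)) + 1
  = 2 + 2 * cos (2 * p).
Proof.
intros h. apply (Rmult_eq_reg_r (cos (PI - 3 * p) - cos (PI - p))); [|exact h].
field_simplify; [|exact h].
rewrite !Rtrigo_facts.cos_pi_minus !sin_PI_x.
replace (3 * p) with (2 * p + p) by ring.
rewrite sin_plus cos_plus !sin_2a !cos_2a.
pose proof (sin2_cos2 p) as H. unfold Rsqr in H.
apply Rminus_diag_uniq.
transitivity ((sin p * sin p + cos p * cos p - 1) *
  (2 * sin p * sin p * cos p + 2 * cos p * cos p * cos p + cos p)); [ring | rewrite H; ring].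
Qed.

Lemma INR_den k : INR (k.*2.+1 + 2) = 2 * INR k + 3.
Proof.
have -> : (k.*2.+1 + 2 = 2 * k + 3)%N by lia.
rewrite -!plusE -!multE plus_INR mult_INR. simpl. lra.
Qed.

Lemma th_pos k : 0 < theta k.
Proof. unfold theta. rewrite INR_den. pose proof (pos_INR k). pose proof PI_RGT_0.
apply Rdiv_lt_0_compat; lra. Qed.
Lemma th_eq k : (2 * INR k + 3) * theta k = 2 * PI.
Proof. unfold theta. rewrite INR_den. pose proof (pos_INR k). field. lra. Qed.

Lemma th_lt k : (INR k + 1) * theta k < PI.
Proof. pose proof (th_eq k). pose proof (th_pos k). pose proof (pos_INR k). nra. Qed.

Lemma th_lt_PI k : theta k < PI.
Proof. pose proof (th_lt k). pose proof (th_pos k). pose proof (pos_INR k). nra. Qed.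


Definition ll k i := 2 * sin (theta k) * sin (INR i * theta k)
   / (cos (INR i * theta k) - cos ((INR i + 1) * theta k)).
Definition rr k i := 2 * sin (theta k) * sin (INR i * theta k)
   / (cos ((INR i - 1) * theta k) - cos (INR i * theta k)).

Lemma facts k i : (1 <= i <= k)%N ->
  0 < sin (theta k) /\ 0 < sin (INR i * theta k) /\
  0 < cos ((INR i - 1) * theta k) - cos (INR i * theta k) /\
  0 < cos (INR i * theta k) - cos ((INR i + 1) * theta k).
Proof.
move=> /andP[h1 h2].
have H1 : 1 <= INR i by apply (le_INR 1); apply/leP.
have H2 : INR i <= INR k by apply le_INR; apply/leP.
pose proof (th_pos k). pose proof (th_lt k). pose proof (th_lt_PI k).
split; [apply sin_gt_0; lra|].
split; [apply sin_gt_0; nra|].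
split; [apply Rlt_Rminus, cos_decreasing_1; nra|].
apply Rlt_Rminus, cos_decreasing_1; nra.
Qed.

Lemma ll_pos k i : (1 <= i <= k)%N -> 0 < ll k i.
Proof. move=> h; have [a [b [c d]]] := facts _ _ h. unfold ll.
apply Rdiv_lt_0_compat; nra. Qed.
Lemma rr_pos k i : (1 <= i <= k)%N -> 0 < rr k i.
Proof. move=> h; have [a [b [c d]]] := facts _ _ h. unfold rr.
apply Rdiv_lt_0_compat; nra. Qed.

Lemma C1_lr k i : (1 <= i <= k)%N -> C1_link (ll k i) (rr k i) = 1.
Proof.
move=> h; have [a [b [c d]]] := facts _ _ h.
have := trig_C1 _ _ a b. unfold C1_link, ll, rr.
replace (INR i * theta k - theta k) with ((INR i - 1) * theta k) by ring.
replace (INR i * theta k + theta k) with ((INR i + 1) * theta k) by ring.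
move=> H. exact (H c d).
Qed.

Lemma rr_1 k : (1 <= k)%N -> rr k 1 = 2 + 2 * cos (theta k).
Proof.
move=> hk. have [a [b [c d]]] := facts k 1 (ltac:(by rewrite leqnn hk)).
unfold rr in *. simpl INR in *.
replace ((1 - 1) * theta k) with 0 in * by ring. rewrite Rmult_1_l in c |- *.
rewrite cos_0 in c |- *. apply trig_r1. lra.
Qed.

Lemma ll_rr k i : (2 <= i <= k)%N -> ll k i.-1 + rr k i = 2 + 2 * cos (theta k).
Proof.
move=> h. have h1 : (1 <= i <= k)%N by lia.
have [a [b [c d]]] := facts k i h1.
have E : INR i.-1 = INR i - 1.
{ have -> : i = (i.-1).+1 by lia. rewrite S_INR /=. ring. }
unfold ll, rr. rewrite E.
replace ((INR i - 1 + 1) * theta k) with ((INR i - 1) * theta k + theta k) by ring.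
replace (INR i * theta k) with ((INR i - 1) * theta k + theta k) in * by ring.
apply trig_sum. lra.
Qed.

Lemma ll_last k : (1 <= k)%N -> ll k k + 1 = 2 + 2 * cos (theta k).
Proof.
move=> hk. have [a [b [c d]]] := facts k k (ltac:(by rewrite leqnn hk)).
unfold ll in *. pose proof (th_eq k) as E.
replace (theta k) with (2 * (theta k / 2)) in * by field.
set p := theta k / 2 in E a b c d |- *.
replace (INR k * (2 * p)) with (PI - 3 * p) in * by lra.
replace ((INR k + 1) * (2 * p)) with (PI - p) in * by lra.
apply trig_last. lra.
Qed.

Lemma bigmax_ge0 (I : Type) (s : seq I) (P : pred I) (F : I -> R) :
  0 <= \big[Rmax/0]_(i <- s | P i) F i.
Proof.
elim: s => [|x s IH]; first by rewrite big_nil; lra.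
rewrite big_cons; case: (P x) => //. eapply Rle_trans; [exact IH| apply Rmax_r].
Qed.

Lemma bigmax_ge (I : eqType) (s : seq I) (P : pred I) (F : I -> R) j :
  j \in s -> P j -> F j <= \big[Rmax/0]_(i <- s | P i) F i.
Proof.
elim: s => [|x s IH] //. rewrite inE => /orP[/eqP<-|hj] hP; rewrite big_cons.
- rewrite hP. apply Rmax_l.
- case: (P x); last by apply IH.
  eapply Rle_trans; [exact (IH hj hP) | apply Rmax_r].
Qed.

Lemma bigmax_le (I : Type) (s : seq I) (P : pred I) (F : I -> R) c :
  0 <= c -> (forall i, P i -> F i <= c) -> \big[Rmax/0]_(i <- s | P i) F i <= c.
Proof.
move=> h0 h. apply: (big_ind (fun x => x <= c)).
- exact h0.
- move=> x y hx hy. exact: Rmax_lub.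
- exact h.
Qed.

Lemma bigmax_in (T : finType) (A : {set T}) (F : T -> R) j :
  j \in A -> F j <= \big[Rmax/0]_(i in A) F i.
Proof. move=> h. by apply bigmax_ge; rewrite ?mem_index_enum. Qed.

Arguments bigmax_in {T} A F {j}.

Definition nd k (b : bool) (i : nat) : 'I_(k.*2.+1) := inord (b + (i.-1).*2).

Lemma nd_val k b i : (1 <= i <= k)%N -> val (nd k b i) = (b + (i.-1).*2)%N.
Proof. move=> h. change (nat_of_ord (nd k b i) = (b + (i.-1).*2)%N). rewrite /nd inordK //. case: b; lia. Qed.

Lemma ell_nd k L b i : (1 <= i <= k)%N -> ellN k L (nd k b i) = ll k i.
Proof.
move=> h. rewrite /ellN nd_val //.
have -> : (b + (i.-1).*2 == k.*2)%N = false by apply/eqP; case: b; lia.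
rewrite half_bit_double. have -> : (i.-1).+1 = i by lia. done.
Qed.

Lemma rN_nd k b i : (1 <= i <= k)%N -> rN k (nd k b i) = rr k i.
Proof.
move=> h. rewrite /rN nd_val //.
have -> : (b + (i.-1).*2 == k.*2)%N = false by apply/eqP; case: b; lia.
rewrite half_bit_double. have -> : (i.-1).+1 = i by lia. done.
Qed.

Lemma rN_max k : rN k ord_max = 1.
Proof. by rewrite /rN /= eqxx. Qed.
Lemma ellN_max k L : ellN k L ord_max = L.
Proof. by rewrite /ellN /= eqxx. Qed.

Lemma key k L (hk : (1 <= k)%N) (b : bool) (Om Ls Rs : {set 'I_(k.*2.+1)}) :
  ord_max \in Rs ->
  (forall i, (1 <= i <= k)%N -> nd k b i \in Om -> nd k b i \in Rs) ->
  (forall i, (1 <= i <= k)%N -> nd k b i \notin Om -> nd k b i \in Ls) ->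
  2 + 2 * cos (theta k) <=
  \big[Rmax/0]_(j in Ls) ellN k L j + \big[Rmax/0]_(j in Rs) rN k j.
Proof.
move=> hZ hR hL.
pose P := fun i => (1 <= i <= k)%N && (nd k b i \in Om).
case: (boolP [exists i : 'I_k.+1, P i]) => [/existsP[i0 Pi0]|hno].
- have ex : exists i, P i by exists i0.
  case: (ex_minnP ex) => m /andP[hm hmO] hmin.
  have hRm := bigmax_in Rs (rN k) (hR m hm hmO).
  rewrite rN_nd // in hRm.
  case: (ltnP 1 m) => hm1.
  + have hm' : (1 <= m.-1 <= k)%N by lia.
    have hnot : nd k b m.-1 \notin Om.
    { apply/negP => hO. have := hmin m.-1 (ltac:(by rewrite /P hm' hO)). lia. }
    have hLm := bigmax_in Ls (ellN k L) (hL _ hm' hnot).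
    rewrite ell_nd // in hLm.
    rewrite -(ll_rr k m) ; [lra| lia].
  + have em : m = 1%N by lia.
    rewrite em in hRm. have := rr_1 k hk.
    have := bigmax_ge0 _ (index_enum 'I_(k.*2.+1)) (fun j => j \in Ls) (ellN k L). lra.
- have hk' : (1 <= k <= k)%N by rewrite hk leqnn.
  have hnot : nd k b k \notin Om.
  { apply/negP => hO. move/existsP: hno; apply. exists (Ordinal (ltnSn k)).
    by rewrite /P /= hk' hO. }
  have hLm := bigmax_in Ls (ellN k L) (hL _ hk' hnot).
  rewrite ell_nd // in hLm.
  have hRm := bigmax_in Rs (rN k) hZ. rewrite rN_max in hRm.
  rewrite -(ll_last k hk). lra.
Qed.

HB.instance Definition _ := Monoid.isComLaw.Build R 0 Rplus (fun x y z => esym (Rplus_assoc x y z)) Rplus_comm Rplus_0_l.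

Lemma sum_indic (T : finType) (F : T -> R) X c :
  \big[Rplus/0]_(S : T) ((if S == X then c else 0) * F S) = c * F X.
Proof.
rewrite (eq_bigr (fun S => if S == X then c * F S else 0)); last first.
  by move=> S _; case: eqP => _; lra.
by rewrite -big_mkcond big_pred1_eq.
Qed.

Lemma Rsum_le (I : Type) (s : seq I) (F G : I -> R) :
  (forall i, F i <= G i) -> \big[Rplus/0]_(i <- s) F i <= \big[Rplus/0]_(i <- s) G i.
Proof.
move=> h. apply: (big_ind2 (fun x y => x <= y)).
- lra.
- move=> x1 x2 y1 y2 h1 h2. lra.
- move=> i _. exact: h.
Qed.

Lemma Rsum_mulr (I : Type) (s : seq I) (F : I -> R) c :
  \big[Rplus/0]_(i <- s) (F i * c) = (\big[Rplus/0]_(i <- s) F i) * c.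
Proof.
elim: s => [|x s IH]; first by rewrite !big_nil; ring.
rewrite !big_cons IH. ring.
Qed.

Definition r1 k := 2 + 2 * cos (theta k).

Lemma r1_gt1 k : (1 <= k)%N -> 1 < r1 k.
Proof. move=> hk. rewrite /r1 -(ll_last k hk). have := ll_pos k k (ltac:(by rewrite hk leqnn)). lra. Qed.

Lemma half_range k (j : 'I_(k.*2.+1)) : (val j < k.*2)%N -> (1 <= (val j)./2.+1 <= k)%N.
Proof. move=> h. rewrite ltnS ltn_half_double. done. Qed.

Lemma rN_le k (hk : (1 <= k)%N) (j : 'I_(k.*2.+1)) : rN k j <= r1 k.
Proof.
have h1r := r1_gt1 k hk.
rewrite /rN. case: eqP => hj; first lra.
have hj' : (val j < k.*2)%N by have := ltn_ord j; change (val j) with (nat_of_ord j) in hj |- *; lia.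
have hr := half_range _ _ hj'.
change (rr k (val j)./2.+1 <= r1 k).
case: (ltnP 1 (val j)./2.+1) => h1.
- have h2 : (2 <= (val j)./2.+1 <= k)%N by lia.
  have := ll_rr k _ h2. have := ll_pos k ((val j)./2.+1).-1 (ltac:(lia)).
  rewrite /r1. lra.
- have -> : ((val j)./2.+1 = 1)%N by lia. rewrite rr_1 // /r1. lra.
Qed.

Lemma ord_max_val k : val (@ord_max (k.*2)) = k.*2.
Proof. by []. Qed.

Lemma cut_setT_le k (hk : (1 <= k)%N) L lam : is_schedule lam ->
  cut_value (ellN k L) (rN k) lam setT <= r1 k.
Proof.
move=> [hpos hsum]. have h1r := r1_gt1 k hk.
rewrite /cut_value.
apply: Rle_trans (Rsum_le _ _ _ (fun S => lam S * r1 k) _) _.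
- move=> S. apply Rmult_le_compat_l; first exact: hpos.
  have h0 : \big[Rmax/0]_(i in ~: S :&: ~: setT) ellN k L i <= 0.
  { apply bigmax_le; first lra. move=> i. by rewrite !inE andbF. }
  have h2 : \big[Rmax/0]_(i in S :&: setT) rN k i <= r1 k.
  { apply bigmax_le; first lra. move=> i _. exact: rN_le. }
  lra.
- rewrite Rsum_mulr hsum. lra.
Qed.

Lemma bigmin_le (I : eqType) (s : seq I) (P : pred I) (F : I -> R) x0 j :
  j \in s -> P j -> \big[Rmin/x0]_(i <- s | P i) F i <= F j.
Proof.
elim: s => [|x s IH] //. rewrite inE => /orP[/eqP<-|hj] hP; rewrite big_cons.
- rewrite hP. apply Rmin_l.
- case: (P x); last by apply IH.
  eapply Rle_trans; [apply Rmin_r | exact (IH hj hP)].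
Qed.

Lemma bigmin_ge (I : Type) (s : seq I) (P : pred I) (F : I -> R) x0 c :
  c <= x0 -> (forall i, P i -> c <= F i) -> c <= \big[Rmin/x0]_(i <- s | P i) F i.
Proof.
move=> h0 h. apply: (big_ind (fun x => c <= x)).
- exact h0.
- move=> x y hx hy. exact: Rmin_glb.
- exact h.
Qed.

Lemma min_cut_le k (hk : (1 <= k)%N) L lam : is_schedule lam ->
  min_cut (ellN k L) (rN k) lam <= r1 k.
Proof.
move=> hs. eapply Rle_trans; last exact: (cut_setT_le k hk L lam hs).
rewrite /min_cut. apply: bigmin_le; by rewrite ?mem_index_enum.
Qed.

Definition Xs k : {set 'I_(k.*2.+1)} := [set j : 'I_(k.*2.+1) | ~~ odd j].
Definition Ys k : {set 'I_(k.*2.+1)} := [set j : 'I_(k.*2.+1) | odd j || (val j == k.*2)%N].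

Definition lamS k (d : R) (S : {set 'I_(k.*2.+1)}) : R :=
  (if S == Xs k then (1 - d) / 2 else 0) + (if S == Ys k then (1 - d) / 2 else 0)
  + (if S == set0 then d else 0).

Definition cv k L (S Om : {set 'I_(k.*2.+1)}) :=
  \big[Rmax/0]_(i in (~: S) :&: (~: Om)) ellN k L i
  + \big[Rmax/0]_(i in S :&: Om) rN k i.

Lemma cut_lam k L d Om : cut_value (ellN k L) (rN k) (lamS k d) Om =
  (1 - d) / 2 * cv k L (Xs k) Om + (1 - d) / 2 * cv k L (Ys k) Om + d * cv k L set0 Om.
Proof.
rewrite /cut_value /lamS.
rewrite (eq_bigr (fun S => (if S == Xs k then (1 - d) / 2 else 0) * cv k L S Om
   + (if S == Ys k then (1 - d) / 2 else 0) * cv k L S Om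
   + (if S == set0 then d else 0) * cv k L S Om)); last by move=> S _; rewrite /cv; ring.
by rewrite !big_split /= !sum_indic.
Qed.

Lemma lamS_sched k d : 0 <= d <= 1 -> is_schedule (lamS k d).
Proof.
move=> hd. split.
- move=> S. rewrite /lamS. case: eqP; case: eqP; case: eqP; intros; lra.
- rewrite (eq_bigr (fun S => lamS k d S * 1)); last by move=> S _; ring.
  rewrite /lamS.
  rewrite (eq_bigr (fun S => (if S == Xs k then (1 - d) / 2 else 0) * 1
   + (if S == Ys k then (1 - d) / 2 else 0) * 1
   + (if S == set0 then d else 0) * 1)); last by move=> S _; ring.
  rewrite !big_split /= !(sum_indic _ (fun _ => 1)). lra.
Qed.

Lemma cv_ge0 k L S Om : 0 <= cv k L S Om.
Proof. rewrite /cv. have := bigmax_ge0 _ (index_enum 'I_(k.*2.+1)) (fun j => j \in ~: S :&: ~: Om) (ellN k L).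
have := bigmax_ge0 _ (index_enum 'I_(k.*2.+1)) (fun j => j \in S :&: Om) (rN k). lra. Qed.

Lemma nd_odd k b i : (1 <= i <= k)%N -> odd (nd k b i) = b.
Proof.
move=> h. change (odd (val (nd k b i)) = b). rewrite nd_val // oddD odd_double. by case: b.
Qed.

Lemma nd_neq k b i : (1 <= i <= k)%N -> (val (nd k b i) == k.*2)%N = false.
Proof. move=> h. rewrite nd_val //. apply/eqP. case: b; lia. Qed.

Lemma cv_XY k L (hk : (1 <= k)%N) (Om : {set 'I_(k.*2.+1)}) : ord_max \in Om ->
  2 * r1 k <= cv k L (Xs k) Om + cv k L (Ys k) Om.
Proof.
move=> hZ. rewrite /cv.
have hA := key k L hk false Om (~: Ys k :&: ~: Om) (Xs k :&: Om).
have hB := key k L hk true Om (~: Xs k :&: ~: Om) (Ys k :&: Om).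
have oZ : odd (@ord_max (k.*2)) = false by rewrite /= odd_double.
lapply hA; last by rewrite !inE oZ hZ.
move=> {}hA. lapply hA; last first.
{ move=> i hi hO. by rewrite !inE hO nd_odd. }
move=> {}hA. lapply hA; last first.
{ move=> i hi hO. by rewrite !inE hO nd_odd // nd_neq. }
lapply hB; last by rewrite !inE oZ hZ eqxx.
move=> {}hB. lapply hB; last first.
{ move=> i hi hO. by rewrite !inE hO nd_odd. }
move=> {}hB. lapply hB; last first.
{ move=> i hi hO. by rewrite !inE hO nd_odd. }
rewrite /r1. lra.
Qed.

Lemma cut_lam_ge k L (hk : (1 <= k)%N) d Om : 0 <= d <= 1 -> (1 - d) * r1 k <= d * L ->
  (1 - d) * r1 k <= cut_value (ellN k L) (rN k) (lamS k d) Om.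
Proof.
move=> hd hL. rewrite cut_lam.
have h0 := cv_ge0 k L set0 Om. have hX := cv_ge0 k L (Xs k) Om. have hY := cv_ge0 k L (Ys k) Om.
case: (boolP (ord_max \in Om)) => hZ.
- have := cv_XY k L hk Om hZ. nra.
- have : L <= cv k L set0 Om.
  { rewrite /cv. have := bigmax_in (~: set0 :&: ~: Om) (ellN k L) (j := ord_max).
    rewrite !inE hZ ellN_max. move=> H; have {}H := H isT.
    have := bigmax_ge0 _ (index_enum 'I_(k.*2.+1)) (fun j => j \in set0 :&: Om) (rN k). lra. }
  nra.
Qed.

Lemma min_cut_ge k L (hk : (1 <= k)%N) d : 0 <= d <= 1 -> (1 - d) * r1 k <= d * L ->
  (1 - d) * r1 k <= min_cut (ellN k L) (rN k) (lamS k d).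
Proof.
move=> hd hL. rewrite /min_cut. apply bigmin_ge; last by move=> Om _; apply cut_lam_ge.
by apply cut_lam_ge.
Qed.

Definition Eset k L := fun x => exists lam, is_schedule lam /\ x = min_cut (ellN k L) (rN k) lam.

Lemma Cn_lub k L (hk : (1 <= k)%N) : is_lub (Eset k L) (Cn_net (ellN k L) (rN k)).
Proof.
rewrite /Cn_net. apply epsilon_spec.
have hb : bound (Eset k L).
{ exists (r1 k). move=> x [lam [hs ->]]. exact: min_cut_le. }
have hne : exists x, Eset k L x.
{ exists (min_cut (ellN k L) (rN k) (lamS k 0)). exists (lamS k 0). split => //.
  apply lamS_sched. lra. }
have [m hm] := completeness _ hb hne. by exists m.
Qed.

Lemma Cn_le k L (hk : (1 <= k)%N) : Cn_net (ellN k L) (rN k) <= r1 k.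
Proof.
have [_ h] := Cn_lub k L hk. apply h. move=> x [lam [hs ->]]. exact: min_cut_le.
Qed.

Lemma Cn_ge k L (hk : (1 <= k)%N) d : 0 <= d <= 1 -> (1 - d) * r1 k <= d * L ->
  (1 - d) * r1 k <= Cn_net (ellN k L) (rN k).
Proof.
move=> hd hL. have [h _] := Cn_lub k L hk.
eapply Rle_trans; first exact: (min_cut_ge k L hk d hd hL).
apply h. exists (lamS k d). split => //. exact: lamS_sched.
Qed.

Lemma Cn_lim k (hk : (1 <= k)%N) eps : 0 < eps -> exists M, forall L, M < L ->
  r1 k - eps <= Cn_net (ellN k L) (rN k) <= r1 k.
Proof.
move=> he. have h1 := r1_gt1 k hk.
pose d := Rmin (eps / r1 k) (1/2).
have hd0 : 0 < d by apply Rmin_glb_lt; [apply Rdiv_lt_0_compat; lra | lra].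
have hd1 : d <= 1/2 by apply Rmin_r.
have hd2 : d * r1 k <= eps.
{ have : d <= eps / r1 k by apply Rmin_l.
  move=> H. apply (Rmult_le_compat_r (r1 k)) in H; last lra.
  by rewrite /Rdiv Rmult_assoc Rinv_l ?Rmult_1_r in H; lra. }
exists (r1 k / d). move=> L hL. split; last exact: Cn_le.
have hL' : r1 k <= d * L.
{ have : r1 k / d * d <= L * d by apply Rmult_le_compat_r; lra.
  rewrite /Rdiv Rmult_assoc Rinv_l ?Rmult_1_r; lra. }
have := Cn_ge k L hk d (ltac:(lra)) (ltac:(nra)). nra.
Qed.

Lemma ellN_half k L (j : 'I_(k.*2.+1)) : (val j < k.*2)%N -> ellN k L j = ll k (val j)./2.+1.
Proof. move=> h. rewrite /ellN. have -> : (val j == k.*2) = false by apply/eqP; lia. done. Qed.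
Lemma rN_half k (j : 'I_(k.*2.+1)) : (val j < k.*2)%N -> rN k j = rr k (val j)./2.+1.
Proof. move=> h. rewrite /rN. have -> : (val j == k.*2) = false by apply/eqP; lia. done. Qed.

Lemma C1_net_1 k (hk : (1 <= k)%N) L : 0 < L -> C1_net (ellN k L) (rN k) = 1.
Proof.
move=> hL. apply Rle_antisym.
- apply bigmax_le; first lra. move=> j _ /=.
  case: (ltnP (val j) k.*2) => hj.
  + rewrite ellN_half // rN_half // C1_lr //; [lra | exact: half_range].
  + rewrite /ellN /rN. have -> : (val j == k.*2) by have := ltn_ord j; change (val j) with (nat_of_ord j) in hj |- *; lia.
    rewrite /C1_link. apply (Rmult_le_reg_r (L + 1)); first lra.
    field_simplify; lra.
- have h0 : (val (@ord0 (k.*2)) < k.*2)%N by rewrite /=; lia.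
  have := bigmax_ge _ (index_enum 'I_(k.*2.+1)) (fun _ => true) (fun i => C1_link (ellN k L i) (rN k i)) ord0.
  rewrite mem_index_enum => H. have {}H := H isT isT.
  have e : C1_link (ellN k L ord0) (rN k ord0) = 1.
  { rewrite ellN_half // rN_half //. apply C1_lr. exact: half_range. }
  rewrite e in H. exact H.
Qed.

Theorem mainTheorem9 (k : nat) (hk : (1 <= k)%nat) :
  (forall j : 'I_(k.*2.+1), forall L, (val j < k.*2)%nat ->
       C1_link (ellN k L j) (rN k j) = 1)
  /\ (forall L, 0 < L -> C1_net (ellN k L) (rN k) = 1)
  /\ rN k ord0 = 2 + 2 * cos (theta k)
  /\ (forall L, 0 < L -> Cn_net (ellN k L) (rN k) <= rN k ord0)
  /\ (forall eps, 0 < eps -> exists M, forall L, M < L ->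
        Rabs (Cn_net (ellN k L) (rN k) - (2 + 2 * cos (theta k))) < eps)
  /\ (forall eps, 0 < eps -> exists M, forall L, M < L ->
        Rabs (C1_net (ellN k L) (rN k) / Cn_net (ellN k L) (rN k)
              - 1 / (2 + 2 * cos (theta k))) < eps).
Proof.
have hk' : (1 <= k)%N by [].
have h0 : (val (@ord0 (k.*2)) < k.*2)%N by rewrite /=; lia.
have hr0 : rN k ord0 = 2 + 2 * cos (theta k).
{ rewrite rN_half // rr_1 //. }
have h1 := r1_gt1 k hk'.
split; [|split; [|split; [|split; [|split]]]].
- move=> j L hj. rewrite ellN_half // rN_half //. apply C1_lr. exact: half_range.
- move=> L hL. exact: C1_net_1.
- exact hr0.
- move=> L _. rewrite hr0. exact: Cn_le.
- move=> eps he. have [M HM] := Cn_lim k hk' (eps / 2) (ltac:(lra)).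
  exists M => L hL. have := HM L hL. rewrite /r1 => H.
  apply Rabs_def1; lra.
- move=> eps he. pose e := Rmin (eps / 4) (1 / 2).
  have he0 : 0 < e by apply Rmin_glb_lt; lra.
  have he1 : e <= eps / 4 by apply Rmin_l.
  have he2 : e <= 1 / 2 by apply Rmin_r.
  have [M HM] := Cn_lim k hk' e he0.
  exists (Rmax M 0) => L hL.
  have hLM : M < L by eapply Rle_lt_trans; [apply Rmax_l| exact hL].
  have hL0 : 0 < L by eapply Rle_lt_trans; [apply Rmax_r| exact hL].
  rewrite C1_net_1 //.
  have := HM L hLM. rewrite /r1.
  set C := Cn_net _ _. set r := 2 + 2 * cos (theta k). move=> [Ha Hb].
  rewrite /r1 -/r in h1.
  have hC : 0 < C by lra.
  have E : 1 / C - 1 / r = (r - C) / (C * r) by field; lra.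
  have hCr : 1/2 < C * r by nra.
  have hm := Rmult_lt_compat_l eps _ _ he hCr.
  rewrite E. apply Rabs_def1.
  + apply (Rmult_lt_reg_r (C * r)); first nra.
    rewrite /Rdiv Rmult_assoc Rinv_l; [|nra]. lra.
  + apply (Rmult_lt_reg_r (C * r)); first nra.
    rewrite /Rdiv Rmult_assoc Rinv_l; [|nra]. lra.
Qed.
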